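(* Let $T$ be a tree and $s\in C$ any scenario of $T$. Then $T$ has a prime broadcast center under $s$.
   Context: $T$ is a finite tree with vertex set $V(T)$, $|V(T)|=n$, and edge set $E(T)$. Each edge $(u,v)$ carries an interval $[w^-_{u,v},w^+_{u,v}]$ of non-negative reals. A scenario $s$ assigns to every edge $(u,v)$ a weight $w^s_{u,v}\in[w^-_{u,v},w^+_{u,v}]$; $C$ is the set of all scenarios. A constant $\rho>0$ (connection time) is fixed. Broadcast time (postal model): for a subtree $G$ of $T$ and $u\in V(G)$, $b^s(u,G)$ is defined recursively by $b^s(u,G)=0$ if $u$ has no neighbour in $G$; otherwise, if $v_1,\dots,v_h$ are the neighbours of $u$ in $G$ and $G_{v}$ denotes the component of $G-u$ containing $v$, then $b^s(u,G)=\min_{\pi}\max_{1\le k\le h}\big(k\rho+w^s_{u,v_{\pi(k)}}+b^s(v_{\pi(k)},G_{v_{\pi(k)}})\big)$, the minimum over all permutations $\pi$ of $\{1,\dots,h\}$. The set of broadcast centers under $s$ is $B^s=\{u\in V(T): b^s(u,T)\le b^s(v,T)\ \forall v\in V(T)\}$. For distinct $x,y\in V(T)$, $T_{x,y}$ denotes the component of $T-x$ containing $y$, and $\bar T_{x,y}$ denotes the subtree of $T$ induced by $V(T)\setminus V(T_{x,y})$ (it contains $x$). A vertex $\hat\kappa\in B^s$ is a prime broadcast center of $T$ under $s$ if $b^s(\hat\kappa,\bar T_{\hat\kappa,u})\ge b^s(u,\bar T_{u,\hat\kappa})$ for every neighbour $u$ of $\hat\kappa$ in $T$. *)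

(* Defs.v *)
From mathcomp Require Import all_boot all_order all_algebra.
From mathcomp Require Import reals.
Set Implicit Arguments. Unset Strict Implicit. Unset Printing Implicit Defensive.
Import Order.TTheory GRing.Theory Num.Theory.
Local Open Scope ring_scope.

Section Broadcast.
Variable V : finType.

Definition simple_graph (e : rel V) : Prop :=
  (forall x y, e x y = e y x) /\ (forall x, ~~ e x x).
Definition graph_connected (e : rel V) : Prop := forall x y, connect e x y.
Definition graph_acyclic (e : rel V) : Prop :=
  forall (x : V) (p : seq V),
    uniq (x :: p) -> (2 <= size p)%N -> path e x p -> ~~ e (last x p) x.
Definition is_tree (e : rel V) : Prop :=
  [/\ (0 < #|V|)%N, simple_graph e, graph_connected e & graph_acyclic e].

Variable R : realType.

Definition is_scenario (e : rel V) (wlo wup s : V -> V -> R) : Prop :=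
  (forall u v, s u v = s v u) /\
  (forall u v, e u v -> wlo u v <= s u v <= wup u v).

Definition seqmin (l : seq R) : R := foldr Num.min (head 0 l) l.
Definition seqmax (l : seq R) : R := foldr Num.max (head 0 l) l.

Definition restr (e : rel V) (A : {set V}) : rel V :=
  [rel a b | [&& e a b, a \in A & b \in A]].

Definition comp (e : rel V) (G : {set V}) (u v : V) : {set V} :=
  [set x | connect (restr e (G :\ u)) v x].

Definition nbrs (e : rel V) (G : {set V}) (u : V) : seq V :=
  enum [set v in G | e u v].

(* postal-model broadcast time, by recursion on a fuel bound;
   ordering p of the neighbours: the k-th (k = 1, 2, ...) is p_(k-1). *)
Fixpoint bt_aux (e : rel V) (rho : R) (s : V -> V -> R) (n : nat)
    (u : V) (G : {set V}) : R :=
  match n with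
  | 0%N => 0
  | n'.+1 =>
      let N := nbrs e G u in
      if N is [::] then 0 else
      seqmin [seq seqmax (mkseq (fun k =>
                 let v := nth u p k in
                 k.+1%:R * rho + s u v + bt_aux e rho s n' v (comp e G u v))
               (size p))
             | p <- permutations N]
  end.

Definition btime (e : rel V) (rho : R) (s : V -> V -> R)
    (u : V) (G : {set V}) : R := bt_aux e rho s #|G| u G.

Definition Tsub (e : rel V) (x y : V) : {set V} := comp e setT x y.
Definition Tbar (e : rel V) (x y : V) : {set V} := ~: Tsub e x y.

Definition broadcast_center (e : rel V) (rho : R) (s : V -> V -> R) (u : V)
  : Prop := forall v, btime e rho s u setT <= btime e rho s v setT.

Definition prime_broadcast_center (e : rel V) (rho : R) (s : V -> V -> R)
    (k : V) : Prop :=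
  broadcast_center e rho s k /\
  forall u, e k u ->
    btime e rho s u (Tbar e u k) <= btime e rho s k (Tbar e k u).

End Broadcast.

(* Main.v *)
Require Import Defs.
From mathcomp Require Import all_boot all_order all_algebra.
From mathcomp Require Import reals.
Set Implicit Arguments. Unset Strict Implicit. Unset Printing Implicit Defensive.
Import Order.TTheory GRing.Theory Num.Theory.
Local Open Scope ring_scope.

Section Graph.
Variable V : finType.
Variable e : rel V.
Hypothesis esym : forall x y, e x y = e y x.
Hypothesis eirr : forall x, ~~ e x x.
Hypothesis econn : graph_connected e.
Hypothesis eacyc : graph_acyclic e.

Lemma restr_sym (A : {set V}) : symmetric (restr e A).
Proof. by move=> x y; rewrite /restr /= esym; case: (x \in A); case: (y \in A); rewrite ?andbF ?andbT. Qed.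

Lemma connect_restr_sym (A : {set V}) x y :
  connect (restr e A) x y = connect (restr e A) y x.
Proof. exact: (sym_connect_sym (@restr_sym A)). Qed.

Lemma restr_closed (A : {set V}) v z : v \in A -> connect (restr e A) v z -> z \in A.
Proof.
move=> vA /connectP[p pth ->]; elim: p v vA pth => //= y p IH v vA.
by case/andP=> /and3P[_ _ yA] pth; exact: IH yA pth.
Qed.

Lemma connect_restr_sub (A B : {set V}) x y :
  (forall z, connect (restr e A) x z -> z \in B) ->
  connect (restr e A) x y -> connect (restr e B) x y.
Proof.
move=> H /connectP[p pth ->]; apply/connectP; exists p => //.
elim: p x pth H => //= z p IH x /andP[exz pth] H.
apply/andP; split.
  have /and3P[ex _ _] := exz; rewrite /restr /= ex (H x (connect0 _ _)).
  by rewrite (H z (connect1 exz)).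
apply: IH pth _ => w c; apply: H; exact: connect_trans (connect1 exz) c.
Qed.

Lemma path_restr (A : {set V}) x p :
  path e x p -> all (mem A) (x :: p) -> path (restr e A) x p.
Proof.
elim: p x => //= y p IH x /andP[exy pth] /and3P[xA yA allp].
by rewrite /restr /= exy xA yA /= IH //= yA.
Qed.

Lemma neq_of_e x y : e x y -> x != y.
Proof. by apply: contraTneq => ->; exact: eirr. Qed.

Lemma TI a b : e a b -> ~: Defs.comp e setT a b = Defs.comp e setT b a.
Proof.
move=> eab; have ab := neq_of_e eab.
apply/setP => x; rewrite !inE.
apply/idP/idP.
- move=> nc.
  have /connectP[p0 pth0 xl] := econn b x.
  case/shortenP: pth0 xl => p pth up _ xl.
  have ain : a \in p.
    apply/negPn/negP => anp; move/negP: nc; apply.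
    apply/connectP; exists p => //; apply: path_restr => //.
    apply/allP => z zin; rewrite !inE andbT.
    move: zin; rewrite inE => /orP[/eqP->|zp]; first by rewrite eq_sym.
    by apply: contraNneq anp => <-.
  case/splitPr: p / ain pth up xl => p1 p2.
  rewrite cat_path last_cat /= => /and3P[_ _ pth2] up xl.
  apply/connectP; exists p2; last by [].
  apply: path_restr => //.
  apply/allP => z zin; rewrite !inE andbT.
  apply: contraTneq zin => ->.
  move: up; rewrite /= mem_cat negb_or => /andP[/andP[_]]; rewrite inE negb_or.
  by move=> H _.
- move=> c2; apply/negP => c1.
  pose e' := [rel y z | restr e (setT :\ a) y z || restr e (setT :\ b) y z].
  have s1 : connect e' a x.
    by apply: connect_sub c2 => y z rz; apply: connect1; rewrite /e' /= rz orbT.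
  have s2 : connect e' x b.
    rewrite connect_restr_sym in c1.
    by apply: connect_sub c1 => y z rz; apply: connect1; rewrite /e' /= rz.
  have /connectP[p0 pth0 bl] := connect_trans s1 s2.
  case/shortenP: pth0 bl => p pth up _ bl.
  have ee' : subrel e' e.
    by move=> y z; rewrite /e' /restr /= => /orP[/and3P[]|/and3P[]].
  have := eacyc up _ (sub_path ee' pth).
  rewrite -bl esym eab => H; apply: (negP (H _)) => //.
  case: p pth up bl {H} => [|z [|w p]] //=.
  + by move=> _ _ ba; move: ab; rewrite ba eqxx.
  + rewrite andbT => ez _ bz; move: ez; rewrite -bz /e' /restr /= !inE.
    by rewrite !eqxx !andbF.
Qed.

Lemma TbarE u k : e u k -> Tbar e u k = Defs.comp e setT k u.
Proof. by move=> euk; rewrite /Tbar /Tsub TI. Qed.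

Lemma nbr_Tbar u k v : e u k -> e u v -> v != k -> v \in Tbar e u k.
Proof.
move=> euk euv vk; rewrite TbarE // inE; apply: connect1.
by rewrite /restr /= euv !inE vk (neq_of_e euk).
Qed.

Lemma comp_Tbar u k v : v \in Tbar e u k -> v != u ->
  Defs.comp e (Tbar e u k) u v = Defs.comp e setT u v.
Proof.
move=> vT vu; apply/setP => x; rewrite !in_set; apply/idP/idP.
- apply: connect_restr_sub => z cz.
  have := restr_closed _ cz; rewrite !in_setD1 vu vT => /(_ isT).
  by case/andP=> -> _; rewrite in_setT.
- apply: connect_restr_sub => z cz.
  have := restr_closed _ cz; rewrite !in_setD1 vu in_setT => /(_ isT) /andP[-> _] /=.
  move: vT; rewrite /Tbar /Tsub !in_setC !in_set => vT; apply/negP => ckz.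
  move/negP: vT; apply.
  by apply: connect_trans ckz _; rewrite connect_restr_sym.
Qed.

Lemma Tbar_proper k u x : e k u -> e u x -> x != k ->
  Tbar e x u \proper Tbar e u k.
Proof.
move=> eku eux xk.
have euk : e u k by rewrite esym.
have exu : e x u by rewrite esym.
have xT := nbr_Tbar euk eux xk.
rewrite (TbarE exu) (TbarE euk); apply/properP; split.
- apply/subsetP => y; rewrite !inE => cy.
  apply: (@connect_trans _ _ x); first apply: connect1.
    by rewrite /restr /= eux !inE xk (neq_of_e euk).
  apply: connect_restr_sub cy => z cz; rewrite !inE andbT.
  apply/negP => /eqP zk; move: xT; rewrite /Tbar /Tsub !inE => /negP; apply.
  by rewrite connect_restr_sym -zk.
- exists u; first by rewrite inE connect0.
  rewrite inE; apply/negP => c.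
  have := restr_closed _ c; rewrite !inE eqxx /= => H.
  by move: H; rewrite (neq_of_e exu) => /(_ isT).
Qed.
End Graph.

Section Seqs.
Variable R : realType.

Lemma foldr_min_mem (a : R) l : foldr Num.min a l \in a :: l.
Proof.
elim: l => [|x l IH] /=; first by rewrite mem_head.
rewrite minEle; case: ifP => _; first by rewrite !inE eqxx orbT.
by move: IH; rewrite !inE => /orP[->|->]; rewrite ?orbT.
Qed.

Lemma seqmin_mem (l : seq R) : l != [::] -> seqmin l \in l.
Proof.
case: l => // a l _; have := foldr_min_mem a (a :: l).
by rewrite /seqmin /= inE => /orP[/eqP->|//]; rewrite mem_head.
Qed.

Lemma foldr_min_le (a : R) l x : x \in l -> foldr Num.min a l <= x.
Proof.
elim: l => //= y l IH; rewrite inE ge_min => /orP[/eqP->|/IH->];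
  by rewrite ?lexx ?orbT.
Qed.

Lemma seqmin_le (l : seq R) x : x \in l -> seqmin l <= x.
Proof. exact: foldr_min_le. Qed.

Lemma foldr_max_ge (a : R) l x : x \in l -> x <= foldr Num.max a l.
Proof.
elim: l => //= y l IH; rewrite inE le_max => /orP[/eqP->|/IH->];
  by rewrite ?lexx ?orbT.
Qed.

Lemma seqmax_ge (l : seq R) x : x \in l -> x <= seqmax l.
Proof. exact: foldr_max_ge. Qed.

Lemma foldr_max_le (a : R) l c : a <= c ->
  (forall x, x \in l -> x <= c) -> foldr Num.max a l <= c.
Proof.
move=> ac; elim: l => [|y l IH] H /=; first exact: ac.
rewrite ge_max H ?mem_head //=; apply: IH => x xl; apply: H; by rewrite inE xl orbT.
Qed.

Lemma seqmax_le (l : seq R) c : l != [::] ->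
  (forall x, x \in l -> x <= c) -> seqmax l <= c.
Proof.
case: l => // a l _ H; apply: foldr_max_le => //; apply: H; exact: mem_head.
Qed.
End Seqs.

Section Bcast.
Variable V : finType.
Variable e : rel V.
Hypothesis esym : forall x y, e x y = e y x.
Hypothesis eirr : forall x, ~~ e x x.
Hypothesis econn : graph_connected e.
Hypothesis eacyc : graph_acyclic e.
Variable R : realType.
Variable rho : R.
Variable s : V -> V -> R.

Local Notation bt := (bt_aux e rho s).
Local Notation bT := (btime e rho s).

Lemma comp_sub (G : {set V}) u v : v \in G :\ u ->
  Defs.comp e G u v \subset G :\ u.
Proof. by move=> vG; apply/subsetP => x; rewrite inE; apply: restr_closed. Qed.

Lemma comp_card (G : {set V}) u v : u \in G -> v \in G :\ u ->
  (#|Defs.comp e G u v| <= #|G|.-1)%N.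
Proof.
move=> uG vG; rewrite (cardsD1 u G) uG add1n /=.
exact: subset_leq_card (comp_sub vG).
Qed.

Lemma comp_self (G : {set V}) u v : v \in Defs.comp e G u v.
Proof. by rewrite inE connect0. Qed.

Lemma nbrsP (G : {set V}) u v : v \in nbrs e G u -> v \in G :\ u /\ e u v.
Proof.
rewrite mem_enum inE => /andP[vG euv]; split => //.
by rewrite in_setD1 vG andbT eq_sym (neq_of_e eirr euv).
Qed.

Lemma fuel n m u (G : {set V}) : u \in G -> (#|G| <= n)%N -> (#|G| <= m)%N ->
  bt n u G = bt m u G.
Proof.
move=> uG; have G0 : (0 < #|G|)%N by apply/card_gt0P; exists u.
elim: n m u G uG G0 => [|n IH] [|m] u G uG G0 hn hm.
- by [].
- by move: hn; rewrite leqn0 => /eqP H; rewrite H in G0.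
- by move: hm; rewrite leqn0 => /eqP H; rewrite H in G0.
rewrite /=.
have Hn : forall v, v \in nbrs e G u -> v \in G :\ u /\ e u v by move=> v; apply: nbrsP.
move: Hn; case: (nbrs e G u) => [|a l] Hn //.
congr seqmin; apply/eq_in_map => p; rewrite mem_permutations => pp.
congr seqmax; rewrite /mkseq; apply/eq_in_map => j; rewrite mem_iota => /andP[_ jl].
congr (_ + _).
have vin : nth u p j \in a :: l by rewrite -(perm_mem pp) mem_nth.
have [vG _] := Hn _ vin.
have cc := comp_card uG vG.
have vc := comp_self G u (nth u p j).
have c0 : (0 < #|Defs.comp e G u (nth u p j)|)%N by apply/card_gt0P; exists (nth u p j).
apply: IH => //.
  by apply: leq_trans cc _; rewrite -ltnS prednK.
by apply: leq_trans cc _; rewrite -ltnS prednK.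
Qed.

Definition val (G : {set V}) u p :=
  seqmax (mkseq (fun k => let v := nth u p k in
     k.+1%:R * rho + s u v + bt (#|G|.-1) v (Defs.comp e G u v)) (size p)).

Lemma btimeE u (G : {set V}) : u \in G ->
  bT u G = if nbrs e G u is [::] then 0 else
    seqmin [seq val G u p | p <- permutations (nbrs e G u)].
Proof.
move=> uG; have G0 : (0 < #|G|)%N by apply/card_gt0P; exists u.
rewrite /btime /val; move: G0; case: #|G| => [//|n] _ /=.
by case: (nbrs e G u).
Qed.

Lemma opt_perm u (G : {set V}) : u \in G ->
  exists q, perm_eq q (nbrs e G u) /\ bT u G = val G u q.
Proof.
move=> uG; rewrite btimeE //; case E: (nbrs e G u) => [|a l].
  by exists [::]; split.
have : seqmin [seq val G u p | p <- permutations (a :: l)] \in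
        [seq val G u p | p <- permutations (a :: l)].
  apply: seqmin_mem.
  have : a :: l \in permutations (a :: l) by rewrite mem_permutations.
  by case: (permutations (a :: l)).
case/mapP => q; rewrite mem_permutations => qp ->.
by exists q.
Qed.

Lemma le_val u (G : {set V}) p : u \in G -> perm_eq p (nbrs e G u) ->
  bT u G <= val G u p.
Proof.
move=> uG pp; rewrite btimeE //; move: pp; case E: (nbrs e G u) => [|a l] pp.
  by move: pp => /perm_nilP ->; rewrite /val /= lexx.
by apply: seqmin_le; apply: map_f; rewrite mem_permutations.
Qed.

End Bcast.

From mathcomp Require Import lra.

Section Main.
Variable V : finType.
Variable e : rel V.
Hypothesis esym : forall x y, e x y = e y x.
Hypothesis eirr : forall x, ~~ e x x.
Hypothesis econn : graph_connected e.
Hypothesis eacyc : graph_acyclic e.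
Variable R : realType.
Variable rho : R.
Variable s : V -> V -> R.
Hypothesis rho_gt0 : 0 < rho.
Hypothesis ssym : forall u v, s u v = s v u.
Hypothesis s_ge0 : forall u v, e u v -> 0 <= s u v.

Local Notation bt := (bt_aux e rho s).
Local Notation bT := (btime e rho s).

Lemma in_Tbar u k : e u k -> u \in Tbar e u k.
Proof. by move=> euk; rewrite (TbarE esym eirr econn eacyc euk) comp_self. Qed.

Lemma Tbar_card u k : e u k -> (#|Tbar e u k| <= #|[set: V]|.-1)%N.
Proof.
move=> euk; rewrite (TbarE esym eirr econn eacyc euk).
apply: comp_card; first by rewrite in_setT.
by rewrite in_setD1 in_setT andbT (neq_of_e eirr euk).
Qed.

Lemma bound_A k u : e k u -> rho + s k u + bT u (Tbar e u k) <= bT k setT.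
Proof.
move=> eku; have euk : e u k by rewrite esym.
have [q [qp ->]] := opt_perm e rho s (in_setT k).
have uq : u \in q by rewrite (perm_mem qp) mem_enum inE in_setT eku.
set j := index u q.
have jl : (j < size q)%N by rewrite index_mem.
apply: le_trans (seqmax_ge _).
  2: by apply: (map_f _ (x:=j)); rewrite mem_iota.
rewrite /= nth_index // -(TbarE esym eirr econn eacyc euk).
have -> : bt (#|[set: V]|.-1) u (Tbar e u k) = bT u (Tbar e u k).
  by rewrite /btime; apply: fuel => //; [exact: in_Tbar | exact: Tbar_card].
have : rho <= j.+1%:R * rho.
  by rewrite ler_pMl // ler1n.
lra.
Qed.

Lemma nbrs_mem (G : {set V}) u x : (x \in nbrs e G u) = (x \in G) && e u x.
Proof. by rewrite mem_enum inE. Qed.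

Lemma nbrs_split u k : e u k ->
  perm_eq (k :: nbrs e (Tbar e u k) u) (nbrs e setT u).
Proof.
move=> euk; apply: uniq_perm.
- rewrite /= enum_uniq andbT mem_enum inE negb_and; apply/orP; left.
  by rewrite /Tbar /Tsub in_setC negbK comp_self.
- exact: enum_uniq.
move=> x; rewrite in_cons !nbrs_mem in_setT.
have [->|xk] := eqVneq x k; first by rewrite euk.
by case exu: (e u x); rewrite ?andbF // andbT (nbr_Tbar esym eirr econn eacyc euk exu xk).
Qed.

Lemma bound_C u k c : e u k ->
  rho + s u k + bT k (Tbar e k u) <= c ->
  rho + bT u (Tbar e u k) <= c -> bT u setT <= c.
Proof.
move=> euk h1 h2; have eku : e k u by rewrite esym.
have uG := in_Tbar euk.
have [q [qp Eq]] := opt_perm e rho s uG.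
have pp : perm_eq (k :: q) (nbrs e setT u).
  by apply: perm_trans (nbrs_split euk); rewrite perm_cons.
apply: le_trans; first exact: (le_val rho s (in_setT u) pp).
apply: seqmax_le; first by rewrite /mkseq /=.
move=> x /mapP[j]; rewrite mem_iota => /andP[_ jl] ->; case: j jl => [|j] jl /=.
- rewrite mul1r -(TbarE esym eirr econn eacyc eku).
  have -> : bt (#|[set: V]|.-1) k (Tbar e k u) = bT k (Tbar e k u).
    by rewrite /btime; apply: fuel => //; [exact: in_Tbar | exact: Tbar_card].
  exact: h1.
- set v := nth u q j.
  have vq : v \in q by rewrite mem_nth.
  have vin : v \in nbrs e (Tbar e u k) u by rewrite -(perm_mem qp).
  have [vG euv] := nbrsP eirr vin.
  move: (vG); rewrite in_setD1 => /andP[vu vT].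
  rewrite -(comp_Tbar esym vT vu).
  have cc := comp_card e uG vG.
  have c0 : (0 < #|Defs.comp e (Tbar e u k) u v|)%N by apply/card_gt0P; exists v; exact: comp_self.
  have cT := Tbar_card euk.
  rewrite (@fuel _ _ eirr _ rho s _ (#|Tbar e u k|.-1) v); last first.
  + by apply: leq_trans cc _.
  + exact: leq_trans cc (leq_trans (leq_pred _) cT).
  + exact: comp_self.
  have : j.+1%:R * rho + s u v + bt (#|Tbar e u k|.-1) v (Defs.comp e (Tbar e u k) u v)
           <= bT u (Tbar e u k).
    rewrite Eq; apply: seqmax_ge; apply: (map_f _ (x:=j)); rewrite mem_iota //.
  have -> : j.+2%:R * rho = rho + j.+1%:R * rho by rewrite -addn1 natrD mulrDl mul1r addrC.
  lra.
Qed.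

Lemma center_step k u : broadcast_center e rho s k -> e k u ->
  bT k (Tbar e k u) < bT u (Tbar e u k) -> broadcast_center e rho s u.
Proof.
move=> ck eku lt v; apply: le_trans (ck v).
have euk : e u k by rewrite esym.
have hA := bound_A eku; have sk := s_ge0 eku.
apply: bound_C euk _ _; first rewrite [s u k]ssym; lra.
Qed.

Lemma descend n k u : (#|Tbar e u k| <= n)%N -> e k u ->
  broadcast_center e rho s u ->
  bT k (Tbar e k u) < bT u (Tbar e u k) ->
  exists k0, prime_broadcast_center e rho s k0.
Proof.
elim: n k u => [|n IH] k u hn eku cu lt.
  have euk : e u k by rewrite esym.
  move: hn; rewrite leqn0 => /eqP/cards0_eq H.
  by move: (in_Tbar euk); rewrite H inE.
case: (boolP [forall x, e u x ==> (bT x (Tbar e x u) <= bT u (Tbar e u x))]) => H.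
  by exists u; split => // x eux; move/forallP: H => /(_ x) /implyP; apply.
move: H; rewrite negb_forall => /existsP[x]; rewrite negb_imply -ltNge.
case/andP=> eux ltx.
have xk : x != k.
  by apply/eqP => xk; subst x; lra.
have cx := center_step cu eux ltx.
have hp := proper_card (Tbar_proper esym eirr econn eacyc eku eux xk).
apply: (IH u x) cx ltx => //.
by rewrite -ltnS; apply: leq_trans hp hn.
Qed.

End Main.

Unset Implicit Arguments.
Set Strict Implicit.
Theorem lemma3 (V : finType) (e : rel V) (R : realType) (rho : R)
    (wlo wup s : V -> V -> R) :
  is_tree e -> 0 < rho ->
  (forall u v, wlo u v = wlo v u /\ wup u v = wup v u) ->
  (forall u v, e u v -> 0 <= wlo u v <= wup u v) ->
  is_scenario e wlo wup s ->
  exists k : V, prime_broadcast_center e rho s k.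
Proof.
move=> [V0 [esym eirr] econn eacyc] rho0 _ wpos [ssym sb].
have s0 : forall u v, e u v -> 0 <= s u v.
  move=> u v euv; case/andP: (sb u v euv) => h _.
  by case/andP: (wpos u v euv) => h' _; exact: le_trans h' h.
pose l := [seq btime e rho s v setT | v <- enum V].
have ln : l != [::] by move: V0; rewrite cardE /l; case: (enum V).
have := seqmin_mem ln; case/mapP => k0 _ Ek0.
have ck0 : broadcast_center e rho s k0.
  by move=> v; rewrite -Ek0; apply: seqmin_le; apply: map_f; rewrite mem_enum.
case: (boolP [forall u, e k0 u ==> (btime e rho s u (Tbar e u k0) <= btime e rho s k0 (Tbar e k0 u))]) => H.
  by exists k0; split => // u eu; move/forallP: H => /(_ u)/implyP; apply.
move: H; rewrite negb_forall => /existsP[u]; rewrite negb_imply -ltNge.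
case/andP=> eu ltu.
exact: (descend esym eirr econn eacyc rho0 ssym s0 (leqnn _) eu
          (center_step esym eirr econn eacyc rho0 ssym s0 ck0 eu ltu) ltu).
Qed.
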